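(* Let $k$ be a field of characteristic zero and let ${\boldsymbol\lambda},{\boldsymbol\mu}\in M_n(k)$ be antisymmetric. If there exists $A\in GL_n(\mathbb Z)$ with ${\boldsymbol\mu}=A{\boldsymbol\lambda}A^{\mathrm{tr}}$, then $k_{\boldsymbol\lambda}(x_1,\dots,x_n)\cong k_{\boldsymbol\mu}(x_1,\dots,x_n)$ as Poisson algebras over $k$.
   Context: For antisymmetric ${\boldsymbol\lambda}\in M_n(k)$, $k_{\boldsymbol\lambda}(x_1,\dots,x_n)$ is the rational function field $k(x_1,\dots,x_n)$ with the unique Poisson bracket satisfying $\{x_i,x_j\}=\lambda_{ij}x_ix_j$ for all $i,j$. *)

(* Defs.v *)
From HB Require Import structures.
From mathcomp Require Import all_boot all_order all_algebra.
From mathcomp Require Import fraction.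
From mathcomp.multinomials Require Import mpoly.
Set Implicit Arguments. Unset Strict Implicit. Unset Printing Implicit Defensive.
Import Order.TTheory GRing.Theory Num.Theory.
Local Open Scope ring_scope.

Notation ratfun k n := {fraction {mpoly k[n]}}.

Definition rf_const (k : fieldType) (n : nat) (c : k) : ratfun k n :=
  tofrac (c%:MP : {mpoly k[n]}).

Definition rf_var (k : fieldType) (n : nat) (i : 'I_n) : ratfun k n :=
  tofrac ('X_i : {mpoly k[n]}).

Definition is_poisson_bracket (k : fieldType) (n : nat)
  (b : ratfun k n -> ratfun k n -> ratfun k n) : Prop :=
  [/\ (forall (c : k) f g h, b (rf_const n c * f + g) h = rf_const n c * b f h + b g h),
      (forall f g, b f g = - b g f),
      (forall f g h, b f (b g h) + b g (b h f) + b h (b f g) = 0)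
    & (forall f g h, b f (g * h) = b f g * h + g * b f h)].

(* b is "the" Poisson bracket of k_lambda(x_1..x_n): {x_i,x_j} = lambda_ij x_i x_j *)
Definition is_qtorus_bracket (k : fieldType) (n : nat) (lam : 'M[k]_n)
  (b : ratfun k n -> ratfun k n -> ratfun k n) : Prop :=
  is_poisson_bracket b /\
  forall i j : 'I_n, b (rf_var k i) (rf_var k j) = rf_const n (lam i j) * rf_var k i * rf_var k j
    .

Definition poisson_iso (k : fieldType) (n : nat)
  (b1 b2 : ratfun k n -> ratfun k n -> ratfun k n) (phi : ratfun k n -> ratfun k n) : Prop :=
  [/\ bijective phi,
      (forall f g, phi (f + g) = phi f + phi g),
      (forall f g, phi (f * g) = phi f * phi g),
      (forall c : k, phi (rf_const n c) = rf_const n c)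
    & (forall f g, phi (b1 f g) = b2 (phi f) (phi g))].

(* Main.v *)
Require Import Defs.
From HB Require Import structures.
From mathcomp Require Import all_boot all_order all_algebra.
From mathcomp Require Import fraction generic_quotient.
From mathcomp.multinomials Require Import mpoly.
From mathcomp Require Import ring zify.
Set Implicit Arguments. Unset Strict Implicit. Unset Printing Implicit Defensive.
Import Order.TTheory GRing.Theory Num.Theory.
Local Open Scope ring_scope.
Lemma frac_repr (R : idomainType) (f : {fraction R}) :
  exists p q : R, q != 0 /\ f = tofrac p / tofrac q.
Proof.
elim/quotW: f => x; exists (\n_x), (\d_x); split; first exact: denom_ratioP.
have dn0 : tofrac \d_x != 0 :> {fraction R} by rewrite tofrac_eq0 denom_ratioP.
rewrite -[LHS](mulfK dn0); congr (_ / _).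
unlock FracField.tofrac; rewrite !piE.
apply/eqmodP; rewrite /= FracField.equivfE /FracField.mulf /=.
rewrite !numden_Ratio ?mulf_neq0 ?oner_eq0 ?denom_ratioP //.
by rewrite !mulr1 mulrC.
Qed.

Lemma frac_repr' (R : idomainType) (f : {fraction R}) :
  \d_(repr f) != 0 /\ f = tofrac \n_(repr f) / tofrac \d_(repr f).
Proof.
split; first exact: denom_ratioP.
set x := repr f.
have dn0 : tofrac \d_x != 0 :> {fraction R} by rewrite tofrac_eq0 denom_ratioP.
rewrite -[LHS](mulfK dn0); congr (_ / _).
rewrite -[f in LHS]reprK -/x.
unlock FracField.tofrac; rewrite !piE.
apply/eqmodP; rewrite /= FracField.equivfE /FracField.mulf /=.
rewrite !numden_Ratio ?mulf_neq0 ?oner_eq0 ?denom_ratioP //.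
by rewrite !mulr1 mulrC.
Qed.

Section Main.
Variables (k : fieldType) (n : nat).
Local Notation F := (ratfun k n).
Local Notation R := {mpoly k[n]}.
Local Notation cst := (@rf_const k n).
Local Notation x := (@rf_var k n).

Lemma cst0 : cst 0 = 0. Proof. by rewrite /rf_const mpolyC0 tofrac0. Qed.
Lemma cst1 : cst 1 = 1. Proof. by rewrite /rf_const mpolyC1 tofrac1. Qed.
Lemma cstD a b : cst (a + b) = cst a + cst b.
Proof. by rewrite /rf_const mpolyCD tofracD. Qed.
Lemma cstM a b : cst (a * b) = cst a * cst b.
Proof. by rewrite /rf_const mpolyCM tofracM. Qed.
Lemma cstN a : cst (- a) = - cst a.
Proof. by rewrite /rf_const mpolyCN tofracN. Qed.

Lemma x_neq0 i : x i != 0.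
Proof.
rewrite /rf_var tofrac_eq0; apply/eqP => h.
have := congr1 (mcoeff U_(i)) h; rewrite mcoeffX eqxx mcoeff0 => /eqP.
by rewrite oner_eq0.
Qed.

Lemma tofrac_ind (P : F -> Prop) :
  (forall c, P (cst c)) -> (forall i, P (x i)) ->
  (forall f g, P f -> P g -> P (f + g)) -> (forall f g, P f -> P g -> P (f * g)) ->
  forall p : R, P (tofrac p).
Proof.
move=> Pc Px PD PM p; rewrite (mpolyE p) rmorph_sum.
apply: big_ind => //; first by rewrite -cst0.
move=> m _; rewrite -mul_mpolyC rmorphM; apply: (PM); first exact: Pc.
rewrite mpolyXE_id rmorph_prod; apply: big_ind => //; first by rewrite -cst1.
move=> i _; rewrite rmorphXn; elim: (m i) => [|j IH]; first by rewrite expr0 -cst1.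
by rewrite exprS; apply: (PM) => //; exact: (Px i).
Qed.

Definition fhom (P : F -> F) :=
  [/\ forall f g, P (f + g) = P f + P g, forall f g, P (f * g) = P f * P g
    & forall c, P (cst c) = cst c].

Section Fhom.
Variable P : F -> F.
Hypothesis hP : fhom P.

Lemma fhom0 : P 0 = 0.
Proof. by case: hP => _ _ hc; rewrite -cst0 hc. Qed.
Lemma fhom1 : P 1 = 1.
Proof. by case: hP => _ _ hc; rewrite -cst1 hc. Qed.
Lemma fhomD f g : P (f + g) = P f + P g. Proof. by case: hP. Qed.
Lemma fhomM f g : P (f * g) = P f * P g. Proof. by case: hP. Qed.
Lemma fhomN f : P (- f) = - P f.
Proof. by apply/eqP; rewrite -subr_eq0 opprK -fhomD addNr fhom0. Qed.
Lemma fhomV f : P (f^-1) = (P f)^-1.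
Proof.
have [->|f0] := eqVneq f 0; first by rewrite invr0 fhom0 invr0.
have h : P f * P (f^-1) = 1 by rewrite -fhomM mulfV // fhom1.
have pf0 : P f != 0 by apply/eqP => e; move: h; rewrite e mul0r => /eqP; rewrite eq_sym oner_eq0.
by rewrite -[LHS](mulKf pf0) h mulr1.
Qed.
Lemma fhom_neq0 f : f != 0 -> P f != 0.
Proof.
move=> f0; apply/eqP => e.
have : P f * P (f^-1) = 1 by rewrite -fhomM mulfV // fhom1.
by rewrite e mul0r => /eqP; rewrite eq_sym oner_eq0.
Qed.
Lemma fhomXn f m : P (f ^+ m) = P f ^+ m.
Proof. by elim: m => [|m IH]; rewrite ?fhom1 // !exprS fhomM IH. Qed.
Lemma fhomXz f (z : int) : P (f ^ z) = P f ^ z.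
Proof. by case: z => m /=; rewrite ?fhomV fhomXn. Qed.
Lemma fhom_prod (I : Type) (r : seq I) (g : I -> F) :
  P (\prod_(i <- r) g i) = \prod_(i <- r) P (g i).
Proof. exact: (big_morph _ fhomM fhom1). Qed.
End Fhom.

Lemma fhom_comp P Q : fhom P -> fhom Q -> fhom (P \o Q).
Proof.
move=> hP hQ; split => /= [f g|f g|c].
- by rewrite (fhomD hQ) (fhomD hP).
- by rewrite (fhomM hQ) (fhomM hP).
- by case: hQ => _ _ ->; case: hP => _ _ ->.
Qed.

Lemma fhom_id_eq P : fhom P -> (forall i, P (x i) = x i) -> forall f, P f = f.
Proof.
move=> hP hx f; have [p [q [q0 ->]]] := frac_repr f.
have hpoly : forall p, P (tofrac p) = tofrac p.
  apply: (@tofrac_ind (fun g => P g = g)) => //; first by case: hP.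
  - by move=> f1 g1 h1 h2; rewrite fhomD // h1 h2.
  - by move=> f1 g1 h1 h2; rewrite fhomM // h1 h2.
by rewrite fhomM // fhomV // !hpoly.
Qed.

Definition pder (P : F -> F) (D : F -> F) :=
  [/\ forall f g, D (f + g) = D f + D g,
      forall f g, D (f * g) = D f * P g + P f * D g
    & forall c, D (cst c) = 0].

Lemma pder_eq P D1 D2 : fhom P -> pder P D1 -> pder P D2 ->
  (forall i, D1 (x i) = D2 (x i)) -> forall f, D1 f = D2 f.
Proof.
move=> hP [a1 m1 c1] [a2 m2 c2] hx f.
have hpoly : forall p, D1 (tofrac p) = D2 (tofrac p).
  apply: (@tofrac_ind (fun g => D1 g = D2 g)) => //; first by move=> c; rewrite c1 c2.
  - by move=> f1 g1 h1 h2; rewrite a1 a2 h1 h2.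
  - by move=> f1 g1 h1 h2; rewrite m1 m2 h1 h2.
have [p [q [q0 ->]]] := frac_repr f.
set g := tofrac p / tofrac q.
have qF0 : tofrac q != 0 :> F by rewrite tofrac_eq0.
have ep : tofrac p = tofrac q * g by rewrite /g mulrC divfK.
have := hpoly p; rewrite ep m1 m2 hpoly => /addrI /mulfI; apply.
exact: fhom_neq0.
Qed.

Section Bracket.
Variable b : F -> F -> F.
Hypothesis hb : is_poisson_bracket b.

Lemma bA f g : b f g = - b g f. Proof. by case: hb. Qed.
Lemma bM f g h : b f (g * h) = b f g * h + g * b f h. Proof. by case: hb. Qed.
Lemma blin c f g h : b (cst c * f + g) h = cst c * b f h + b g h. Proof. by case: hb. Qed.
Lemma b_f0 f : b f 0 = 0.
Proof. by have := bM f 0 0; rewrite !mulr0 mul0r addr0. Qed.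
Lemma b_0f f : b 0 f = 0.
Proof. by rewrite bA b_f0 oppr0. Qed.
Lemma b_f1 f : b f 1 = 0.
Proof.
have := bM f 1 1; rewrite !mulr1 mul1r => e.
have : b f 1 + b f 1 = b f 1 + 0 by rewrite addr0 -e.
by move/addrI.
Qed.
Lemma b_1f f : b 1 f = 0.
Proof. by rewrite bA b_f1 oppr0. Qed.
Lemma b_cl c f : b (cst c) f = 0.
Proof. by have := blin c 1 0 f; rewrite mulr1 addr0 b_1f b_0f mulr0 addr0. Qed.
Lemma b_cr c f : b f (cst c) = 0.
Proof. by rewrite bA b_cl oppr0. Qed.
Lemma bDl f g h : b (f + g) h = b f h + b g h.
Proof. by have := blin 1 f g h; rewrite cst1 !mul1r. Qed.
Lemma bDr f g h : b h (f + g) = b h f + b h g.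
Proof. by rewrite bA bDl opprD -!bA. Qed.
Lemma bMl f g h : b (f * g) h = b f h * g + f * b g h.
Proof. by rewrite bA bM opprD -mulNr -bA (bA h g) mulrN opprK. Qed.

Definition Lr f g l := b f g = l * f * g.

Lemma Lr_1 f : Lr f 1 0.
Proof. by rewrite /Lr b_f1 !mul0r. Qed.
Lemma Lr_mul f g h l1 l2 : Lr f g l1 -> Lr f h l2 -> Lr f (g * h) (l1 + l2).
Proof. by rewrite /Lr bM => -> ->; ring. Qed.
Lemma Lr_inv f g l : g != 0 -> Lr f g l -> Lr f g^-1 (- l).
Proof.
move=> g0 e; have := bM f g g^-1; rewrite mulfV // b_f1 e => /eqP.
rewrite eq_sym addr_eq0 => /eqP e2.
by rewrite /Lr; apply: (mulfI g0); rewrite -[g * b f _]opprK -e2 mulfK // mulrCA mulfV // mulr1 mulNr.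
Qed.
Lemma Lr_Xn f g l m : Lr f g l -> Lr f (g ^+ m) (l *+ m).
Proof.
move=> e; elim: m => [|m IH]; first by rewrite expr0 mulr0n; exact: Lr_1.
by rewrite exprS mulrS; apply: Lr_mul.
Qed.
Lemma Lr_Xz f g l (z : int) : g != 0 -> Lr f g l -> Lr f (g ^ z) (l *~ z).
Proof.
move=> g0 e; case: z => m /=; first exact: Lr_Xn.
rewrite NegzE mulrNz; apply: Lr_inv; first by rewrite expf_neq0.
exact: Lr_Xn.
Qed.
Lemma Lr_prod f (g l : 'I_n -> F) : (forall j, Lr f (g j) (l j)) ->
  Lr f (\prod_(j < n) g j) (\sum_(j < n) l j).
Proof.
move=> h; apply: (big_ind2 (fun G L => Lr f G L)); first exact: Lr_1.
  by move=> ? ? ? ? ; apply: Lr_mul.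
by move=> j _; exact: h.
Qed.
Lemma Lr_sym f g l : Lr f g l -> Lr g f (- l).
Proof. by rewrite /Lr => e; rewrite bA e !mulNr -!mulrA [g * f]mulrC. Qed.

End Bracket.

Definition mon (a : 'rV[int]_n) : F := \prod_(i < n) x i ^ (a 0 i).

Lemma unit_neq0 (f : F) : f != 0 -> f \is a GRing.unit.
Proof. by rewrite unitfE. Qed.

Lemma mon_neq0 a : mon a != 0.
Proof.
rewrite /mon; apply/prodf_neq0 => i _.
by case: (a 0 i) => m /=; rewrite ?invr_eq0 expf_neq0 // x_neq0.
Qed.

Lemma monD a c : mon (a + c) = mon a * mon c.
Proof.
rewrite /mon -big_split; apply: eq_bigr => i _.
by rewrite mxE exprzDr // unitfE x_neq0.
Qed.

Lemma mon0 : mon 0 = 1.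
Proof. by rewrite /mon; apply: big1 => i _; rewrite mxE expr0z. Qed.

Lemma mon_sum (I : Type) (r : seq I) (a : I -> 'rV[int]_n) :
  mon (\sum_(i <- r) a i) = \prod_(i <- r) mon (a i).
Proof. exact: (big_morph _ monD mon0). Qed.

Lemma prodXz (I : Type) (r : seq I) (g : I -> F) (z : int) :
  (forall i, g i != 0) -> (\prod_(i <- r) g i) ^ z = \prod_(i <- r) g i ^ z.
Proof.
move=> h; elim: r => [|a r IH]; first by rewrite !big_nil exp1rz.
have u : \prod_(i <- r) g i != 0.
  apply: (big_ind (fun y : F => y != 0)) => [|y1 y2 h1 h2|i _].
  - exact: oner_neq0.
  - exact: (mulf_neq0 h1 h2).
  - exact: h.
rewrite !big_cons exprzMl; first by rewrite IH.
  rewrite unitfE; exact: h.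
rewrite unitfE; exact: u.
Qed.

Lemma monZ (z : int) a : mon (z *: a) = mon a ^ z.
Proof.
rewrite /mon prodXz => [|i]; last first.
  by case: (a 0 i) => m /=; rewrite ?invr_eq0 expf_neq0 // x_neq0.
by apply: eq_bigr => i _; rewrite mxE exprz_exp mulrC.
Qed.

Lemma mon_delta i : mon (row i 1%:M) = x i.
Proof.
rewrite /mon (bigD1 i) //= big1 => [|j ji]; rewrite mxE ?mxE ?eqxx ?mulr1 //.
by rewrite eq_sym (negbTE ji) expr0z.
Qed.

Lemma fhom_mon P (A : 'M[int]_n) : fhom P -> (forall i, P (x i) = mon (row i A)) ->
  forall a, P (mon a) = mon (a *m A).
Proof.
move=> hP hx a; rewrite {1}/mon fhom_prod //.
rewrite mulmx_sum_row mon_sum; apply: eq_bigr => i _.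
by rewrite fhomXz // hx monZ.
Qed.

End Main.
Section Phi.
Variables (k : fieldType) (n : nat).
Local Notation F := (ratfun k n).
Local Notation R := {mpoly k[n]}.
Local Notation cst := (@rf_const k n).
Local Notation x := (@rf_var k n).
Local Notation mon := (@mon k n).

Definition cstR : {rmorphism k -> F} := (@tofrac R \o @mpolyC n k).
Lemma cstRE c : cstR c = cst c. Proof. by []. Qed.

Variable A : 'M[int]_n.
Definition hA (i : 'I_n) : F := mon (row i A).
Definition phiP (p : R) : F := mmap cstR hA p.

Lemma phiPD p q : phiP (p + q) = phiP p + phiP q. Proof. exact: rmorphD. Qed.
Lemma phiPM p q : phiP (p * q) = phiP p * phiP q. Proof. exact: rmorphM. Qed.
Lemma phiP1 : phiP 1 = 1. Proof. exact: rmorph1. Qed.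
Lemma phiPC c : phiP c%:MP = cst c. Proof. by rewrite /phiP mmapC. Qed.
Lemma phiPX i : phiP 'X_i = hA i. Proof. by rewrite /phiP mmapX mmap1U. Qed.

Definition mrow (m : 'X_{1..n}) : 'rV[int]_n := \row_i (m i)%:Z.

Lemma mmap1E m : mmap1 hA m = mon (mrow m *m A).
Proof.
rewrite mulmx_sum_row mon_sum /mmap1; apply: eq_bigr => i _.
by rewrite monZ mxE.
Qed.

Lemma phiPE p : phiP p = \sum_(m <- msupp p) cst p@_m * mon (mrow m *m A).
Proof. by rewrite /phiP /mmap; apply: eq_bigr => m _; rewrite mmap1E. Qed.

Lemma mon_nat (c : 'rV[int]_n) : (forall i, 0 <= c 0 i) ->
  mon c = tofrac 'X_[[multinom absz (c ord0 i) | i < n]].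
Proof.
move=> h; rewrite mpolyXE_id rmorph_prod /mon; apply: eq_bigr => i _.
rewrite mnmE rmorphXn -[c 0 i]gez0_abs ?h //.
Qed.

Hypothesis Au : A \in unitmx.

Lemma phiP_inj p : phiP p = 0 -> p = 0.
Proof.
move=> hp.
set s := msupp p.
pose v m := mrow m *m A.
pose N : 'rV[int]_n := \row_i (\sum_(m <- s) absz (v m ord0 i))%:Z.
have c1 : forall m, m \in s -> forall i, 0 <= (v m + N) 0 i.
  move=> m ms i.
  have : (`|v m ord0 i| <= \sum_(m <- s) `|v m ord0 i|)%N.
    by rewrite (big_rem m) //= leq_addr.
  move=> hS; rewrite [X in 0 <= X]mxE [X in _ + X]mxE; move: hS.
  move: (\sum_(m <- s) _)%N (v m ord0 i) => S t.
  lia.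
pose g m := [multinom absz ((v m + N)%R ord0 i) | i < n].
have c2 : forall m, m \in s -> mon (v m + N) = tofrac 'X_[g m].
  by move=> m ms; rewrite mon_nat //; exact: c1.
have c3 : {in s &, injective g}.
  move=> m1 m2 m1s m2s /mnmP e.
  have e2 : v m1 = v m2.
    apply/(addIr N)/rowP => i.
    have := e i; rewrite !mnmE => ei.
    by rewrite -[LHS]gez0_abs ?c1 // -[RHS]gez0_abs ?c1 // ei.
  have e3 : mrow m1 = mrow m2.
    by rewrite -(mulmxK Au (mrow m1)) -(mulmxK Au (mrow m2)); congr (_ *m _).
  apply/mnmP => i; have := congr1 (fun r : 'rV[int]_n => r 0 i) e3.
  by rewrite /= !mxE => -[].
pose Q := \sum_(m <- s) p@_m *: 'X_[g m].
have hQ : mon N * phiP p = tofrac Q.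
  rewrite phiPE mulr_sumr /Q rmorph_sum big_seq [RHS]big_seq.
  apply: eq_bigr => m ms.
  rewrite -mul_mpolyC rmorphM mulrCA -monD [N + _]addrC -/(v m) (c2 m ms).
  by [].
have Q0 : Q = 0.
  by apply/eqP; rewrite -tofrac_eq0 -hQ hp mulr0.
apply/mpolyP => m0; rewrite mcoeff0.
have [m0s|m0ns] := boolP (m0 \in s); last first.
  by apply/eqP; move: m0ns; rewrite mcoeff_msupp negbK.
have := congr1 (mcoeff (g m0)) Q0.
rewrite mcoeff0 /Q raddf_sum (big_rem m0) //= mcoeffZ mcoeffX eqxx mulr1.
rewrite big1_seq ?addr0 // => m /andP [_ mr].
rewrite mcoeffZ mcoeffX.
have mm0 : m != m0.
  by move: mr; rewrite mem_rem_uniq ?msupp_uniq // => /andP [].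
have ms : m \in s by move: mr; rewrite mem_rem_uniq ?msupp_uniq // => /andP [].
case: eqP => [e|_]; last by rewrite mulr0.
by move: mm0; rewrite (c3 _ _ ms m0s e) eqxx.
Qed.

Lemma phiP_neq0 q : q != 0 -> phiP q != 0.
Proof. by move=> q0; apply: contra q0 => /eqP /phiP_inj ->. Qed.

Definition Phi (f : F) : F := phiP (\n_(repr f)) / phiP (\d_(repr f)).

Lemma PhiE p q : q != 0 -> Phi (tofrac p / tofrac q) = phiP p / phiP q.
Proof.
move=> q0; rewrite /Phi.
set f := tofrac p / tofrac q.
have [d0 e] := frac_repr' f.
move: d0 e; set N := \n_(repr f); set D := \d_(repr f) => d0 e.
have qF : tofrac q != 0 :> F by rewrite tofrac_eq0.
have dF : tofrac D != 0 :> F by rewrite tofrac_eq0.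
have : tofrac p / tofrac q == tofrac N / tofrac D :> F by rewrite -e.
rewrite (eqr_div _ _ qF dF) -!tofracM tofrac_eq => /eqP h.
apply/eqP; rewrite (eqr_div _ _ (phiP_neq0 d0) (phiP_neq0 q0)) -!phiPM h.
by rewrite mulrC.
Qed.

Lemma Phi_fhom : fhom Phi.
Proof.
split.
- move=> f g.
  have [p [q [q0 ->]]] := frac_repr f.
  have [p' [q' [q0' ->]]] := frac_repr g.
  have qF : tofrac q != 0 :> F by rewrite tofrac_eq0.
  have qF' : tofrac q' != 0 :> F by rewrite tofrac_eq0.
  rewrite (addf_div _ _ qF qF') -!tofracM -tofracD (PhiE _ (mulf_neq0 q0 q0')).
  rewrite (PhiE p q0) (PhiE p' q0') (addf_div _ _ (phiP_neq0 q0) (phiP_neq0 q0')).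
  by rewrite phiPD !phiPM.
- move=> f g.
  have [p [q [q0 ->]]] := frac_repr f.
  have [p' [q' [q0' ->]]] := frac_repr g.
  rewrite mulf_div -!tofracM (PhiE _ (mulf_neq0 q0 q0')).
  by rewrite (PhiE p q0) (PhiE p' q0') mulf_div !phiPM.
- move=> c.
  have -> : cst c = tofrac c%:MP / tofrac 1 by rewrite tofrac1 divr1.
  by rewrite (PhiE _ (oner_neq0 _)) phiPC phiP1 divr1.
Qed.

Lemma Phi_x i : Phi (x i) = mon (row i A).
Proof.
have -> : x i = tofrac 'X_i / tofrac 1 by rewrite tofrac1 divr1.
by rewrite (PhiE _ (oner_neq0 _)) phiPX phiP1 divr1.
Qed.

End Phi.
Section Fin.
Variables (k : fieldType) (n : nat).
Local Notation F := (ratfun k n).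
Local Notation cst := (@rf_const k n).
Local Notation x := (@rf_var k n).
Local Notation mon := (@mon k n).

Lemma Lr_mon (b : F -> F -> F) (mu : 'M[k]_n) : is_poisson_bracket b ->
  (forall i j, b (x i) (x j) = cst (mu i j) * x i * x j) ->
  forall a c, Lr b (mon a) (mon c)
    (- \sum_(i < n) (- \sum_(j < n) cst (mu i j) *~ c 0 j) *~ a 0 i).
Proof.
move=> hb hm a c.
apply: Lr_sym => //; rewrite /mon; apply: Lr_prod => // i.
apply: Lr_Xz => //; first exact: x_neq0.
apply: Lr_sym => //; apply: Lr_prod => // j.
apply: Lr_Xz => //; first exact: x_neq0.
Qed.

Lemma coef_id (B : 'M[int]_n) (mu : 'M[k]_n) i j :
  cst ((map_mx intr B *m mu *m (map_mx intr B)^T) i j) =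
  - \sum_(i' < n) (- \sum_(j' < n) cst (mu i' j') *~ (row j B) 0 j') *~ (row i B) 0 i'.
Proof.
rewrite -(@cstRE k n) mxE rmorph_sum.
under eq_bigr => j' _ do rewrite mxE mxE mulr_suml rmorph_sum.
rewrite exchange_big.
under [X in _ = - X]eq_bigr => i' _ do rewrite mulNrz.
rewrite sumrN opprK; apply: eq_bigr => i' _.
rewrite mulrz_suml; apply: eq_bigr => j' _.
rewrite !mxE !rmorphM !rmorph_int cstRE.
by rewrite mulrzl mulrzr -!mulrzA mulrC.
Qed.

End Fin.

Theorem lemma5p1 (k : fieldType) (n : nat) (lam mu : 'M[k]_n)
  (bl bm : ratfun k n -> ratfun k n -> ratfun k n) :
  [pchar k] =i pred0 ->
  lam^T = - lam -> mu^T = - mu ->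
  is_qtorus_bracket lam bl -> is_qtorus_bracket mu bm ->
  (exists A : 'M[int]_n, A \in unitmx /\
     mu = map_mx intr A *m lam *m (map_mx intr A)^T) ->
  exists phi : ratfun k n -> ratfun k n, poisson_iso bl bm phi.
Proof.
move=> _ _ _ [hbl hl] [hbm hm] [A [Au hmu]].
pose B := invmx A.
have Bu : B \in unitmx by rewrite unitmx_inv.
pose P := @Phi k n B; pose Q := @Phi k n A.
have hP : fhom P := Phi_fhom k Bu.
have hQ : fhom Q := Phi_fhom k Au.
have hPx : forall i, P (rf_var k i) = mon k (row i B) := Phi_x k Bu.
have hQx : forall i, Q (rf_var k i) = mon k (row i A) := Phi_x k Au.
have QP : forall f, Q (P f) = f.
  apply: (fhom_id_eq (fhom_comp hQ hP)) => i /=.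
  by rewrite hPx (fhom_mon hQ hQx) -row_mul mulVmx // mon_delta.
have PQ : forall f, P (Q f) = f.
  apply: (fhom_id_eq (fhom_comp hP hQ)) => i /=.
  by rewrite hQx (fhom_mon hP hPx) -row_mul mulmxV // mon_delta.
have lamE : lam = map_mx intr B *m mu *m (map_mx intr B)^T.
  rewrite hmu !mulmxA -map_mxM mulVmx // map_mx1 mul1mx -mulmxA -trmx_mul.
  by rewrite -map_mxM mulVmx // map_mx1 trmx1 mulmx1.
have gen : forall i j, P (bl (rf_var k i) (rf_var k j)) =
                       bm (P (rf_var k i)) (P (rf_var k j)).
  move=> i j; rewrite hl (fhomM hP) (fhomM hP) !hPx.
  rewrite (Lr_mon hbm hm); congr (_ * _ * _).
  by case: hP => _ _ ->; rewrite lamE coef_id.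
have step1 : forall i g, P (bl (rf_var k i) g) = bm (P (rf_var k i)) (P g).
  move=> i; apply: (pder_eq hP) => //.
  - split => [g1 g2|g1 g2|c].
    + by rewrite (bDr hbl) (fhomD hP).
    + by rewrite (bM hbl) (fhomD hP) !(fhomM hP).
    + by rewrite (b_cr hbl) (fhom0 hP).
  - split => [g1 g2|g1 g2|c].
    + by rewrite (fhomD hP) (bDr hbm).
    + by rewrite (fhomM hP) (bM hbm).
    + by case: hP => _ _ ->; rewrite (b_cr hbm).
exists P; split.
- by exists Q.
- exact: fhomD hP.
- exact: fhomM hP.
- by case: hP.
move=> f g; move: f; apply: (pder_eq hP) => //.
- split => [f1 f2|f1 f2|c].
  + by rewrite (bDl hbl) (fhomD hP).
  + by rewrite (bMl hbl) (fhomD hP) !(fhomM hP).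
  + by rewrite (b_cl hbl) (fhom0 hP).
- split => [f1 f2|f1 f2|c].
  + by rewrite (fhomD hP) (bDl hbm).
  + by rewrite (fhomM hP) (bMl hbm).
  + by case: hP => _ _ ->; rewrite (b_cl hbm).
Qed.
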